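(* Let $A$ and $D$ be unital $C^*$-algebras and let $X$ be a right Hilbert $A$-module. Suppose $\rho:A\to D$ is a unital injective homomorphism, $V:X\to D$ is a linear map, and $\{u_i\}_{i=1}^n\subset X$, satisfying $V_\xi\rho(a)=V_{\xi a}$, $V_\xi^*V_\eta=\rho(\langle\xi,\eta\rangle_A)$ and $\sum_{i=1}^n V_{u_i}V_{u_i}^*=1$ for all $a\in A$ and $\xi,\eta\in X$. Then $V$ is injective and $\{u_i\}_{i=1}^n$ is a finite basis of $X$. Moreover, if $V_{u_i}^*V_{u_j}=\delta_{ij}1$ for all $i,j$, then $\{u_i\}_{i=1}^n$ is a finite orthonormal basis of $X$.
   Context: A finite set $\{u_i\}_{i=1}^n\subset X$ is a finite basis of $X$ if $\xi=\sum_{i=1}^n u_i\langle u_i,\xi\rangle_A$ for all $\xi\in X$; it is orthonormal if in addition $\langle u_i,u_j\rangle_A=\delta_{ij}1$ for all $i,j$. *)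

(* Defs.v *)
From HB Require Import structures.
From mathcomp Require Import all_boot all_order all_algebra.
From mathcomp Require Import reals.
From mathcomp Require Import complex.
Set Implicit Arguments. Unset Strict Implicit. Unset Printing Implicit Defensive.
Import Order.TTheory GRing.Theory Num.Theory.
Local Open Scope ring_scope.
Local Open Scope complex_scope.

Definition complete_wrt (T : zmodType) (R : realType) (nrm : T -> R) : Prop :=
  forall u : nat -> T,
    (forall e : R, 0 < e -> exists N : nat, forall m k : nat,
        (N <= m)%N -> (N <= k)%N -> nrm (u m - u k) < e) ->
    exists l : T, forall e : R, 0 < e -> exists N : nat, forall k : nat,
        (N <= k)%N -> nrm (u k - l) < e.

Record is_unital_Cstar_algebra (R : realType) (A : algType R[i])
    (star : A -> A) (nrm : A -> R) : Prop := {
  cs_star_add : forall a b, star (a + b) = star a + star b;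
  cs_star_scale : forall (c : R[i]) a, star (c *: a) = c^* *: star a;
  cs_star_mul : forall a b, star (a * b) = star b * star a;
  cs_star_invol : forall a, star (star a) = a;
  cs_norm_eq0 : forall a, nrm a = 0 <-> a = 0;
  cs_norm_triangle : forall a b, nrm (a + b) <= nrm a + nrm b;
  cs_norm_scale : forall (c : R[i]) a, (nrm (c *: a))%:C = `|c| * (nrm a)%:C;
  cs_norm_submult : forall a b, nrm (a * b) <= nrm a * nrm b;
  cs_Cstar_identity : forall a, nrm (star a * a) = nrm a ^+ 2;
  cs_complete : complete_wrt nrm
}.

Definition cs_positive (R : realType) (A : algType R[i]) (star : A -> A) (a : A) :=
  exists b : A, a = star b * b.

Record is_right_Hilbert_module (R : realType) (A : algType R[i])
    (star : A -> A) (nrm : A -> R) (X : lmodType R[i])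
    (act : X -> A -> X) (ip : X -> X -> A) : Prop := {
  hm_act_addl : forall x y a, act (x + y) a = act x a + act y a;
  hm_act_addr : forall x a b, act x (a + b) = act x a + act x b;
  hm_act_mul : forall x a b, act x (a * b) = act (act x a) b;
  hm_act_one : forall x, act x 1 = x;
  hm_act_scalel : forall (c : R[i]) x a, act (c *: x) a = c *: act x a;
  hm_act_scaler : forall (c : R[i]) x a, act x (c *: a) = c *: act x a;
  hm_ip_addr : forall x y z, ip x (y + z) = ip x y + ip x z;
  hm_ip_scaler : forall (c : R[i]) x y, ip x (c *: y) = c *: ip x y;
  hm_ip_act : forall x y a, ip x (act y a) = ip x y * a;
  hm_ip_star : forall x y, star (ip x y) = ip y x;
  hm_ip_pos : forall x, cs_positive star (ip x x);
  hm_ip_definite : forall x, ip x x = 0 -> x = 0;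
  hm_complete : complete_wrt (fun x => Num.sqrt (nrm (ip x x)))
}.

Record is_unital_star_hom (R : realType) (A D : algType R[i])
    (starA : A -> A) (starD : D -> D) (rho : A -> D) : Prop := {
  sh_add : forall a b, rho (a + b) = rho a + rho b;
  sh_scale : forall (c : R[i]) a, rho (c *: a) = c *: rho a;
  sh_mul : forall a b, rho (a * b) = rho a * rho b;
  sh_one : rho 1 = 1;
  sh_star : forall a, rho (starA a) = starD (rho a)
}.

Definition C_linear (R : realType) (X Y : lmodType R[i]) (f : X -> Y) : Prop :=
  (forall x y, f (x + y) = f x + f y) /\ (forall (c : R[i]) x, f (c *: x) = c *: f x).

Definition finite_basis (R : realType) (A : algType R[i]) (X : lmodType R[i])
    (act : X -> A -> X) (ip : X -> X -> A) (n : nat) (u : 'I_n -> X) : Prop :=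
  forall x : X, x = \sum_(i < n) act (u i) (ip (u i) x).

Definition orthonormal_finite_basis (R : realType) (A : algType R[i])
    (X : lmodType R[i]) (act : X -> A -> X) (ip : X -> X -> A)
    (n : nat) (u : 'I_n -> X) : Prop :=
  finite_basis act ip u /\ (forall i j : 'I_n, ip (u i) (u j) = (i == j)%:R).

(* Main.v *)
Require Import Defs.
From HB Require Import structures.
From mathcomp Require Import all_boot all_order all_algebra.
From mathcomp Require Import reals.
From mathcomp Require Import complex.
Import Order.TTheory GRing.Theory Num.Theory.
Local Open Scope ring_scope.

Theorem lemma2p4 (R : realType)
  (A : algType R[i]) (starA : A -> A) (nA : A -> R)
  (HA : is_unital_Cstar_algebra starA nA)
  (D : algType R[i]) (starD : D -> D) (nD : D -> R)
  (HD : is_unital_Cstar_algebra starD nD)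
  (X : lmodType R[i]) (act : X -> A -> X) (ip : X -> X -> A)
  (HX : is_right_Hilbert_module starA nA act ip)
  (rho : A -> D) (Hrho : is_unital_star_hom starA starD rho)
  (Hrho_inj : injective rho)
  (V : X -> D) (HV : C_linear V)
  (n : nat) (u : 'I_n -> X)
  (HVrho : forall (x : X) (a : A), V x * rho a = V (act x a))
  (HVip : forall x y : X, starD (V x) * V y = rho (ip x y))
  (HVsum : \sum_(i < n) V (u i) * starD (V (u i)) = 1) :
  injective V /\ finite_basis act ip u /\
  ((forall i j : 'I_n, starD (V (u i)) * V (u j) = (i == j)%:R) ->
     orthonormal_finite_basis act ip u).
Proof.
have [Vadd Vscale] := HV.
have V0 : V 0 = 0.
  by have := Vadd 0 0; rewrite addr0 => /eqP; rewrite eq_sym -subr_eq0 addrK => /eqP.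
have rho0 : rho 0 = 0.
  by have := sh_add Hrho 0 0; rewrite addr0 => /eqP; rewrite eq_sym -subr_eq0 addrK => /eqP.
have VN : forall y, V (- y) = - V y.
  by move=> y; apply: (addrI (V y)); rewrite -Vadd !subrr V0.
have Vinj : injective V.
  move=> x y Hxy; apply/eqP; rewrite -subr_eq0; apply/eqP.
  apply: (hm_ip_definite HX); apply: Hrho_inj; rewrite rho0 -HVip.
  by rewrite Vadd VN Hxy subrr mulr0.
have Vsum : forall (s : seq 'I_n) (F : 'I_n -> X),
    V (\sum_(i <- s) F i) = \sum_(i <- s) V (F i).
  move=> s F; elim: s => [|a s IH]; first by rewrite !big_nil V0.
  by rewrite !big_cons Vadd IH.
have fb : finite_basis act ip u.
  move=> x; apply: Vinj; rewrite Vsum.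
  rewrite -[V x]mul1r -HVsum mulr_suml; apply: eq_bigr => i _.
  by rewrite -mulrA HVip HVrho.
split => //; split => // Hon; split => // i j.
apply: Hrho_inj; rewrite -HVip Hon.
by case: (i == j); rewrite /= ?mulr1n ?mulr0n; [rewrite (sh_one Hrho) | rewrite rho0].
Qed.
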